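(* Let $f:X\to X$ be a continuous map on a metric space $(X,d)$. The following are equivalent: (i) $\operatorname{Per}(\overline f)$ is dense in $(\mathcal{K}(X),d_H)$; (ii) $\operatorname{Per}(\hat f)$ is dense in $\mathcal{F}_\infty(X)$; (iii) $\operatorname{Per}(\hat f)$ is dense in $\mathcal{F}_0(X)$; (iv) $\operatorname{Per}(\hat f)$ is dense in $\mathcal{F}_S(X)$; (v) $\operatorname{Per}(\hat f)$ is dense in $\mathcal{F}_E(X)$.
   Context: For a map $g:Y\to Y$, $\operatorname{Per}(g)=\{y\in Y:g^p(y)=y$ for some $p\in\mathbb{N}\}$ is the set of periodic points. $\mathbb{I}=[0,1]$. Fuzzy setting: for $u:X\to\mathbb{I}$, $u_\alpha=\{x:u(x)\ge\alpha\}$ ($\alpha\in]0,1]$), $u_0=\overline{\{x:u(x)>0\}}$. $\mathcal{F}(X)$: upper-semicontinuous $u:X\to\mathbb{I}$ with $u_0$ compact and $u_1\ne\varnothing$. $\mathcal{K}(X)$: non-empty compact subsets with Hausdorff metric $d_H(A,B)=\max\{\sup_{a\in A}d(a,B),\sup_{b\in B}d(b,A)\}$; $\overline f(K)=f(K)$. Zadeh extension: $\hat f(u)(x)=\sup\{u(y):f(y)=x\}$ (and $0$ if $f^{-1}(\{x\})=\varnothing$). Metrics on $\mathcal{F}(X)$: $d_\infty(u,v)=\sup_{\alpha\in\mathbb{I}}d_H(u_\alpha,v_\alpha)$; $d_0(u,v)=\inf\{\varepsilon>0:\exists\xi\in\mathcal{T},\ \sup_\alpha|\xi(\alpha)-\alpha|\le\varepsilon,\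 d_\infty(u,\xi\circ v)\le\varepsilon\}$ with $\mathcal{T}$ the strictly increasing homeomorphisms of $\mathbb{I}$; with $\overline d((x,\alpha),(y,\beta))=\max\{d(x,y),|\alpha-\beta|\}$, $\operatorname{end}(u)=\{(x,\alpha):u(x)\ge\alpha\}$, $\operatorname{send}(u)=\operatorname{end}(u)\cap(u_0\times\mathbb{I})$, $d_E$ and $d_S$ are the $\overline d$-Hausdorff distances of endographs and sendographs respectively. $\mathcal{F}_\rho(X)$ denotes $(\mathcal{F}(X),\rho)$. *)

(* Defs.v *)
From Stdlib Require Import Reals.
From Coquelicot Require Import Coquelicot.
Open Scope R_scope.

Definition is_metric {X : Type} (d : X -> X -> R) : Prop :=
  (forall x y, 0 <= d x y) /\ (forall x y, d x y = 0 <-> x = y) /\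
  (forall x y, d x y = d y x) /\ (forall x y z, d x z <= d x y + d y z).

Definition continuous_map {X : Type} (d : X -> X -> R) (f : X -> X) : Prop :=
  forall x eps, 0 < eps -> exists delta, 0 < delta /\
    forall y, d x y < delta -> d (f x) (f y) < eps.

Definition d_open {X : Type} (d : X -> X -> R) (U : X -> Prop) : Prop :=
  forall x, U x -> exists e, 0 < e /\ forall y, d x y < e -> U y.

Definition d_compact {X : Type} (d : X -> X -> R) (K : X -> Prop) : Prop :=
  forall (I : Type) (U : I -> X -> Prop),
    (forall i, d_open d (U i)) -> (forall x, K x -> exists i, U i x) ->
    exists l : list I, forall x, K x -> exists i, List.In i l /\ U i x.

Definition d_closure {X : Type} (d : X -> X -> R) (S : X -> Prop) : X -> Prop :=
  fun x => forall e, 0 < e -> exists y, S y /\ d x y < e.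

Definition in_KX {X : Type} (d : X -> X -> R) (K : X -> Prop) : Prop :=
  (exists x, K x) /\ d_compact d K.

Definition Rbar_maxi (a b : Rbar) : Rbar := if Rbar_le_dec a b then b else a.

Definition dist_set {Y : Type} (dY : Y -> Y -> R) (a : Y) (B : Y -> Prop) : Rbar :=
  Rbar_glb (fun r => exists b, B b /\ r = Finite (dY a b)).

Definition excess {Y : Type} (dY : Y -> Y -> R) (A B : Y -> Prop) : Rbar :=
  Rbar_lub (fun r => exists a, A a /\ r = dist_set dY a B).

Definition dH {Y : Type} (dY : Y -> Y -> R) (A B : Y -> Prop) : Rbar :=
  Rbar_maxi (excess dY A B) (excess dY B A).

Definition image {X : Type} (f : X -> X) (A : X -> Prop) : X -> Prop :=
  fun x => exists y, A y /\ f y = x.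

Definition unitI (a : R) : Prop := 0 <= a <= 1.

Definition level {X : Type} (d : X -> X -> R) (u : X -> R) (a : R) : X -> Prop :=
  fun x => (0 < a -> a <= u x) /\ (a <= 0 -> d_closure d (fun y => 0 < u y) x).

Definition usc {X : Type} (d : X -> X -> R) (u : X -> R) : Prop :=
  forall x r, u x < r -> exists delta, 0 < delta /\
    forall y, d x y < delta -> u y < r.

Definition in_FX {X : Type} (d : X -> X -> R) (u : X -> R) : Prop :=
  (forall x, unitI (u x)) /\ usc d u /\ d_compact d (level d u 0) /\
  (exists x, level d u 1 x).

(** Zadeh extension: sup {u y : f y = x}; for an empty preimage the sup
    in Rbar is m_infty and [real m_infty = 0], giving the convention 0. *)
Definition zadeh {X : Type} (f : X -> X) (u : X -> R) : X -> R :=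
  fun x => real (Rbar_lub (fun r => exists y, f y = x /\ r = Finite (u y))).

Definition d_inf {X : Type} (d : X -> X -> R) (u v : X -> R) : Rbar :=
  Rbar_lub (fun r => exists a, unitI a /\ r = dH d (level d u a) (level d v a)).

Definition cont_on_I (g : R -> R) : Prop :=
  forall a eps, unitI a -> 0 < eps -> exists delta, 0 < delta /\
    forall b, unitI b -> Rabs (b - a) < delta -> Rabs (g b - g a) < eps.

Definition in_T (xi : R -> R) : Prop :=
  (forall a b, unitI a -> unitI b -> a < b -> xi a < xi b) /\
  (forall a, unitI a -> unitI (xi a)) /\
  (exists g : R -> R, (forall b, unitI b -> unitI (g b)) /\
     (forall a, unitI a -> g (xi a) = a) /\ (forall b, unitI b -> xi (g b) = b) /\
     cont_on_I xi /\ cont_on_I g).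

Definition d_0 {X : Type} (d : X -> X -> R) (u v : X -> R) : Rbar :=
  Rbar_glb (fun e => exists eps, e = Finite eps /\ 0 < eps /\
    exists xi, in_T xi /\ (forall a, unitI a -> Rabs (xi a - a) <= eps) /\
      Rbar_le (d_inf d u (fun x => xi (v x))) (Finite eps)).

Definition dbar {X : Type} (d : X -> X -> R) (p q : X * R) : R :=
  Rmax (d (fst p) (fst q)) (Rabs (snd p - snd q)).

Definition endo {X : Type} (u : X -> R) : X * R -> Prop :=
  fun p => unitI (snd p) /\ snd p <= u (fst p).

Definition sendo {X : Type} (d : X -> X -> R) (u : X -> R) : X * R -> Prop :=
  fun p => endo u p /\ level d u 0 (fst p).

Definition d_E {X : Type} (d : X -> X -> R) (u v : X -> R) : Rbar :=
  dH (dbar d) (endo u) (endo v).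

Definition d_S {X : Type} (d : X -> X -> R) (u v : X -> R) : Rbar :=
  dH (dbar d) (sendo d u) (sendo d v).

Definition per_set {X : Type} (f : X -> X) (K : X -> Prop) : Prop :=
  exists p : nat, (1 <= p)%nat /\ forall x, Nat.iter p (image f) K x <-> K x.

Definition per_fuzzy {X : Type} (f : X -> X) (u : X -> R) : Prop :=
  exists p : nat, (1 <= p)%nat /\ Nat.iter p (zadeh f) u = u.

Definition dense_per_K {X : Type} (d : X -> X -> R) (f : X -> X) : Prop :=
  forall K, in_KX d K -> forall eps, 0 < eps ->
    exists L, in_KX d L /\ per_set f L /\ Rbar_lt (dH d K L) (Finite eps).

Definition dense_per_F {X : Type} (d : X -> X -> R) (f : X -> X)
  (rho : (X -> R) -> (X -> R) -> Rbar) : Prop :=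
  forall u, in_FX d u -> forall eps, 0 < eps ->
    exists v, in_FX d v /\ per_fuzzy f v /\ Rbar_lt (rho u v) (Finite eps).

(* Main.v *)
Require Import Defs.
From Stdlib Require Import Reals Lra Lia List ClassicalEpsilon Classical FunctionalExtensionality.
From Coquelicot Require Import Coquelicot.
Open Scope R_scope.

Lemma lub_ub (E : Rbar -> Prop) x : E x -> Rbar_le x (Rbar_lub E).
Proof. intros H. exact (proj1 (proj2_sig (Rbar_ex_lub E)) x H). Qed.
Lemma lub_least (E : Rbar -> Prop) b : (forall x, E x -> Rbar_le x b) -> Rbar_le (Rbar_lub E) b.
Proof. intros H. exact (proj2 (proj2_sig (Rbar_ex_lub E)) b H). Qed.
Lemma glb_lb (E : Rbar -> Prop) x : E x -> Rbar_le (Rbar_glb E) x.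
Proof. intros H. exact (proj1 (proj2_sig (Rbar_ex_glb E)) x H). Qed.
Lemma glb_greatest (E : Rbar -> Prop) b : (forall x, E x -> Rbar_le b x) -> Rbar_le b (Rbar_glb E).
Proof. intros H. exact (proj2 (proj2_sig (Rbar_ex_glb E)) b H). Qed.

Lemma excess_le {Y} (dY : Y -> Y -> R) A B e :
  (forall a, A a -> exists b, B b /\ dY a b <= e) -> Rbar_le (excess dY A B) (Finite e).
Proof.
  intros H. apply lub_least. intros r [a [Ha ->]].
  destruct (H a Ha) as [b [Hb Hd]].
  apply Rbar_le_trans with (Finite (dY a b)). apply glb_lb. now exists b.
  exact Hd.
Qed.

Lemma dH_le {Y} (dY : Y -> Y -> R) A B e :
  (forall a, A a -> exists b, B b /\ dY a b <= e) ->
  (forall b, B b -> exists a, A a /\ dY b a <= e) -> Rbar_le (dH dY A B) (Finite e).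
Proof.
  intros H1 H2. unfold dH, Rbar_maxi. destruct Rbar_le_dec; now apply excess_le.
Qed.

Lemma excess_le_dH {Y} (dY : Y -> Y -> R) A B :
  Rbar_le (excess dY A B) (dH dY A B) /\ Rbar_le (excess dY B A) (dH dY A B).
Proof.
  unfold dH, Rbar_maxi. destruct Rbar_le_dec as [h|h]; split; try easy; try apply Rbar_le_refl.
  apply Rbar_lt_le, Rbar_not_le_lt, h.
Qed.

Lemma excess_lt {Y} (dY : Y -> Y -> R) A B e :
  Rbar_lt (excess dY A B) (Finite e) -> forall a, A a -> exists b, B b /\ dY a b < e.
Proof.
  intros H a Ha. apply NNPP. intros Hn.
  assert (Rbar_le (Finite e) (dist_set dY a B)).
  { apply glb_greatest. intros r [b [Hb ->]]. simpl.
    apply Rnot_lt_le. intros Hlt. apply Hn. now exists b. }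
  assert (Rbar_le (dist_set dY a B) (excess dY A B)) by (apply lub_ub; now exists a).
  apply (Rbar_lt_not_le _ _ H). eapply Rbar_le_trans; eauto.
Qed.

Lemma dH_lt {Y} (dY : Y -> Y -> R) A B e :
  Rbar_lt (dH dY A B) (Finite e) ->
  (forall a, A a -> exists b, B b /\ dY a b < e) /\
  (forall b, B b -> exists a, A a /\ dY b a < e).
Proof.
  intros H. destruct (excess_le_dH dY A B) as [h1 h2]. split; apply excess_lt.
  eapply Rbar_le_lt_trans; eauto. eapply Rbar_le_lt_trans; eauto.
Qed.

Section Topo.
Variable X : Type.
Variable d : X -> X -> R.
Hypothesis hd : is_metric d.

Lemma d_pos x y : 0 <= d x y. Proof. apply hd. Qed.
Lemma d_xx x : d x x = 0. Proof. apply hd. reflexivity. Qed.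
Lemma d_sym x y : d x y = d y x. Proof. apply hd. Qed.
Lemma d_tri x y z : d x z <= d x y + d y z. Proof. apply hd. Qed.
Lemma d_neq x y : x <> y -> 0 < d x y.
Proof. intros H. destruct (d_pos x y) as [h|h]; auto. exfalso. apply H. apply hd. auto. Qed.

Fixpoint maxl (l : list nat) : nat := match l with nil => 0%nat | n :: t => Nat.max n (maxl t) end.
Lemma maxl_ge l n : In n l -> (n <= maxl l)%nat.
Proof. induction l; simpl; intros H; [easy|]. destruct H as [->|H]; [lia|]. specialize (IHl H). lia. Qed.

Lemma compact_closed K x : d_compact d K -> ~ K x -> exists e, 0 < e /\ forall y, d x y < e -> ~ K y.
Proof.
  intros HK Hx.
  destruct (HK nat (fun n y => / INR (S n) < d x y)) as [l Hl].
  - intros n y Hy. exists (d x y - / INR (S n)). split; [lra|].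
    intros z Hz. pose proof (d_tri x z y). rewrite (d_sym z y) in H. lra.
  - intros y Hy. assert (x <> y) by (intros ->; auto).
    destruct (archimed_cor1 (d x y) (d_neq _ _ H)) as [N [HN1 HN2]].
    exists (pred N). replace (S (pred N)) with N by lia. auto.
  - exists (/ INR (S (maxl l))). split. apply Rinv_0_lt_compat, lt_0_INR; lia.
    intros y Hy Ky. destruct (Hl y Ky) as [n [Hn Hd]].
    assert (/ INR (S (maxl l)) <= / INR (S n)).
    { apply Rinv_le_contravar. apply lt_0_INR; lia. apply le_INR. pose proof (maxl_ge l n Hn). lia. }
    lra.
Qed.

Lemma closed_subset_compact K (F : X -> Prop) :
  d_compact d K -> (forall x, ~ F x -> exists e, 0 < e /\ forall y, d x y < e -> ~ F y) ->
  d_compact d (fun x => K x /\ F x).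
Proof.
  intros HK HF I U HU Hc.
  destruct (HK (option I) (fun o y => match o with Some i => U i y | None => ~ F y end)) as [l Hl].
  - intros [i|] y Hy. now apply HU. now apply HF.
  - intros y Ky. destruct (classic (F y)) as [h|h].
    + destruct (Hc y (conj Ky h)) as [i Hi]. now exists (Some i).
    + now exists None.
  - exists (flat_map (fun o => match o with Some i => i :: nil | None => nil end) l).
    intros y [Ky Fy]. destruct (Hl y Ky) as [[i|] [Hi Hy]]; [|easy].
    exists i. split; auto. apply in_flat_map. exists (Some i). simpl; auto.
Qed.

Lemma compact_ext A B : (forall x, A x <-> B x) -> d_compact d A -> d_compact d B.
Proof.
  intros H HA I U HU Hc. destruct (HA I U HU) as [l Hl].
  intros x Ax. apply Hc, H, Ax. exists l. intros x Bx. apply Hl, H, Bx.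
Qed.

Lemma compact_empty : d_compact d (fun _ => False).
Proof. intros I U _ _. exists nil. easy. Qed.

Lemma compact_single y : d_compact d (fun x => x = y).
Proof.
  intros I U _ Hc. destruct (Hc y eq_refl) as [i Hi]. exists (i :: nil).
  intros x ->. exists i. simpl; auto.
Qed.

Lemma compact_union A B : d_compact d A -> d_compact d B -> d_compact d (fun x => A x \/ B x).
Proof.
  intros HA HB I U HU Hc.
  destruct (HA I U HU) as [l1 H1]. intros x Ax; apply Hc; auto.
  destruct (HB I U HU) as [l2 H2]. intros x Bx; apply Hc; auto.
  exists (l1 ++ l2). intros x [Ax|Bx].
  destruct (H1 x Ax) as [i [Hi Hx]]. exists i. split; auto. apply in_or_app; auto.
  destruct (H2 x Bx) as [i [Hi Hx]]. exists i. split; auto. apply in_or_app; auto.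
Qed.

Lemma argmax_list (u : X -> R) (K : X -> Prop) (l : list X) :
  (exists y0, In y0 l /\ K y0) -> exists ym, In ym l /\ K ym /\ forall y, In y l -> K y -> u y <= u ym.
Proof.
  induction l as [|a l IH]; intros [y0 [H0 K0]]; [easy|].
  destruct (classic (exists y1, In y1 l /\ K y1)) as [h|h].
  - destruct (IH h) as [ym [H1 [H2 H3]]].
    destruct (classic (K a /\ u ym <= u a)) as [[Ka Ha]|ha].
    + exists a. split; [simpl; auto|]. split; auto. intros y [->|Hy] Ky. lra. specialize (H3 y Hy Ky). lra.
    + exists ym. split; [simpl; auto|]. split; auto. intros y [->|Hy] Ky; auto.
      apply Rnot_lt_le. intros Hlt. apply ha. split; auto. lra.
  - destruct H0 as [->|H0]. 2:{ exfalso. apply h. eauto. }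
    exists y0. split; [simpl; auto|]. split; auto. intros y [->|Hy] Ky. lra. exfalso; apply h; eauto.
Qed.

Lemma attain (u : X -> R) K : usc d u -> d_compact d K -> (exists x, K x) ->
  exists y, K y /\ forall z, K z -> u z <= u y.
Proof.
  intros Hu HK [x0 K0]. apply NNPP. intros Hn.
  assert (Hs : forall y, K y -> exists z, K z /\ u y < u z).
  { intros y Ky. apply NNPP. intros h. apply Hn. exists y. split; auto.
    intros z Kz. apply Rnot_lt_le. intros hz. apply h. eauto. }
  destruct (HK X (fun y w => K y /\ u w < u y)) as [l Hl].
  - intros y w [Ky Hw]. destruct (Hu w (u y) Hw) as [e [He He2]].
    exists e. split; auto.
  - intros w Kw. destruct (Hs w Kw) as [z [Kz Hz]]. exists z. auto.
  - destruct (Hl x0 K0) as [y0 [Hy0 [Ky0 _]]].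
    destruct (argmax_list u K l (ex_intro _ y0 (conj Hy0 Ky0))) as [ym [Hm1 [Hm2 Hm3]]].
    destruct (Hl ym Hm2) as [y [Hy [Ky Hlt]]]. specialize (Hm3 y Hy Ky). lra.
Qed.

Lemma level_pos u a x : 0 < a -> (level d u a x <-> a <= u x).
Proof. intros Ha. unfold level. split. intros [h _]; auto. intros h; split; auto. intros; lra. Qed.

Lemma level0_of_pos u x : 0 < u x -> level d u 0 x.
Proof. intros h. split. intros; lra. intros _ e He. exists x. rewrite d_xx. auto. Qed.

Lemma level_sub0 u a x : 0 < a -> level d u a x -> level d u 0 x.
Proof. intros Ha H. apply level_pos in H; auto. apply level0_of_pos. lra. Qed.

Lemma zadeh_char (g : X -> X) (w : X -> R) x : (forall y, 0 <= w y <= 1) ->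
  0 <= zadeh g w x <= 1 /\
  ((zadeh g w x = 0 /\ ~ exists z, g z = x) \/
   ((exists z, g z = x) /\ (forall z, g z = x -> w z <= zadeh g w x) /\
    (forall b, (forall z, g z = x -> w z <= b) -> zadeh g w x <= b))).
Proof.
  intros Hw. unfold zadeh.
  set (E := fun r : Rbar => exists y, g y = x /\ r = w y).
  assert (Hub : forall y, g y = x -> Rbar_le (w y) (Rbar_lub E)).
  { intros y Hy. apply lub_ub. exists y; auto. }
  assert (Hle : forall b : Rbar, (forall y, g y = x -> Rbar_le (w y) b) -> Rbar_le (Rbar_lub E) b).
  { intros b Hb. apply lub_least. intros r [y [Hy ->]]. auto. }
  assert (H1 : Rbar_le (Rbar_lub E) 1). { apply Hle. intros y _. simpl. apply Hw. }
  destruct (classic (exists z, g z = x)) as [[z0 Hz0]|hn].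
  - pose proof (Hub z0 Hz0) as H0.
    destruct (Rbar_lub E) as [a| |]; simpl in *; try easy.
    pose proof (Hw z0). split. lra. right. split. eauto. split.
    + intros z Hz. exact (Hub z Hz).
    + intros b Hb. exact (Hle (Finite b) Hb).
  - assert (Hm : Rbar_le (Rbar_lub E) m_infty).
    { apply Hle. intros y Hy. exfalso. apply hn. eauto. }
    destruct (Rbar_lub E); simpl in *; try easy. split. lra. left. auto.
Qed.

Lemma iter_image_char (g : X -> X) n (A : X -> Prop) x :
  Nat.iter n (image g) A x <-> exists y, A y /\ Nat.iter n g y = x.
Proof.
  revert x. induction n as [|n IH]; intros x; simpl.
  - split. intros h; exists x; auto. intros [y [h ->]]; auto.
  - unfold image at 1. split.
    + intros [z [Hz <-]]. apply IH in Hz. destruct Hz as [y [Hy <-]]. eauto.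
    + intros [y [Hy <-]]. exists (Nat.iter n g y). split; auto. apply IH. eauto.
Qed.

Lemma per_mult (g : X -> X) p L : (forall x, Nat.iter p (image g) L x <-> L x) ->
  forall k x, Nat.iter (k * p) (image g) L x <-> L x.
Proof.
  intros H k. induction k as [|k IH]; intros x; simpl. tauto.
  rewrite Nat.iter_add. rewrite iter_image_char. split.
  - intros [y [Hy <-]]. apply H. apply iter_image_char. exists y; split; auto. apply IH; auto.
  - intros Hx. apply H, iter_image_char in Hx. destruct Hx as [y [Hy <-]]. exists y. split; auto.
    apply IH; auto.
Qed.

Variable f : X -> X.
Hypothesis hf : continuous_map d f.

Lemma cont_iter k : continuous_map d (Nat.iter k f).
Proof.
  induction k as [|k IH]; intros x eps He; simpl.
  - exists eps. split; auto.
  - destruct (hf (Nat.iter k f x) eps He) as [d1 [Hd1 H1]].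
    destruct (IH x d1 Hd1) as [d2 [Hd2 H2]]. exists d2. split; auto.
Qed.

Lemma below_attain (g : X -> X) (v : X -> R) x b : continuous_map d g -> in_FX d v -> 0 < b ->
  (forall y, g y = x -> v y < b) -> exists b', 0 <= b' < b /\ forall y, g y = x -> v y <= b'.
Proof.
  intros Hg [Hv1 [Hv2 [Hv3 _]]] Hb H.
  assert (HC : d_compact d (fun y => level d v 0 y /\ g y = x)).
  { apply closed_subset_compact; auto. intros y Hy.
    pose proof (d_neq _ _ Hy) as Ht.
    destruct (Hg y _ Ht) as [e [He H2]]. exists e. split; auto.
    intros z Hz Hgz. specialize (H2 z Hz). rewrite Hgz in H2. lra. }
  assert (Hout : forall y, ~ level d v 0 y -> v y <= 0).
  { intros y Hy. apply Rnot_lt_le. intros h. apply Hy, level0_of_pos, h. }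
  destruct (classic (exists y, level d v 0 y /\ g y = x)) as [Hne|Hne].
  - destruct (attain v _ Hv2 HC Hne) as [ym [[Hm1 Hm2] Hm3]].
    exists (Rmax 0 (v ym)). split.
    + split. apply Rmax_l. specialize (H ym Hm2). apply Rmax_lub_lt; auto.
    + intros y Hy. destruct (classic (level d v 0 y)) as [h|h].
      * eapply Rle_trans. apply (Hm3 y). auto. apply Rmax_r.
      * eapply Rle_trans. apply Hout, h. apply Rmax_l.
  - exists 0. split. lra. intros y Hy. apply Hout. intros h. apply Hne. eauto.
Qed.

Lemma iter_zadeh_level v : in_FX d v -> forall k,
  (forall x, 0 <= Nat.iter k (zadeh f) v x <= 1) /\
  (forall x b, 0 < b -> (b <= Nat.iter k (zadeh f) v x <-> exists y, Nat.iter k f y = x /\ b <= v y)).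
Proof.
  intros Hv. pose proof Hv as [Hv1 _].
  induction k as [|k [IH1 IH2]]; simpl.
  - split. intros x; apply Hv1. intros x b Hb. split. intros h; exists x; auto. intros [y [-> h]]; auto.
  - set (w := Nat.iter k (zadeh f) v) in *.
    split.
    + intros x. apply (zadeh_char f w x IH1).
    + intros x b Hb. destruct (zadeh_char f w x IH1) as [_ [[Hz Hn]|[[z0 Hz0] [Hup Hleast]]]].
      * rewrite Hz. split. intros; lra. intros [y [Hy _]]. exfalso. apply Hn. eauto.
      * split.
        -- intros Hbz. apply NNPP. intros Hno.
           assert (Hlt : forall y, Nat.iter (S k) f y = x -> v y < b).
           { intros y Hy. apply Rnot_le_lt. intros h. apply Hno. eauto. }
           destruct (below_attain (Nat.iter (S k) f) v x b (cont_iter (S k)) Hv Hb Hlt) as [b' [Hb' Hb'2]].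
           assert (forall z, f z = x -> w z <= b').
           { intros z Hz. apply Rnot_lt_le. intros hz.
             destruct (proj1 (IH2 z (w z) ltac:(lra)) (Rle_refl _)) as [y [Hy Hy2]].
             specialize (Hb'2 y). simpl in Hb'2. rewrite Hy, Hz in Hb'2. specialize (Hb'2 eq_refl). lra. }
           specialize (Hleast b' H). lra.
        -- intros [y [Hy Hby]]. simpl in Hy.
           assert (b <= w (Nat.iter k f y)) by (apply IH2; eauto).
           specialize (Hup _ Hy). lra.
Qed.

Lemma per_level v b : in_FX d v -> per_fuzzy f v -> 0 < b -> per_set f (level d v b).
Proof.
  intros Hv [p [Hp Hper]] Hb. exists p. split; auto. intros x.
  rewrite iter_image_char. rewrite level_pos; auto.
  destruct (iter_zadeh_level v Hv p) as [_ H2]. rewrite Hper in H2. rewrite (H2 x b Hb).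
  split; intros [y [h1 h2]]; exists y.
  - pose proof (proj1 (level_pos v b y Hb) h1). auto.
  - split; auto. apply (proj2 (level_pos v b y Hb) h2).
Qed.

Definition vfun (lst : list (R * (X -> Prop))) (x : X) : R :=
  fold_right (fun p acc => if excluded_middle_informative (snd p x) then Rmax (fst p) acc else acc) 0 lst.

Lemma vf_ge0 lst x : 0 <= vfun lst x.
Proof.
  induction lst as [|p l IH]; simpl. lra.
  destruct excluded_middle_informative; auto. eapply Rle_trans; [exact IH|apply Rmax_r].
Qed.

Lemma vf_ub lst x p : In p lst -> snd p x -> fst p <= vfun lst x.
Proof.
  induction lst as [|q l IH]; simpl; intros Hin Hx; [easy|].
  destruct Hin as [->|Hin].
  - destruct excluded_middle_informative; [apply Rmax_l|easy].
  - destruct excluded_middle_informative; auto. eapply Rle_trans; [apply IH; auto|apply Rmax_r].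
Qed.

Lemma vf_ach lst x : vfun lst x = 0 \/ exists p, In p lst /\ snd p x /\ vfun lst x = fst p.
Proof.
  induction lst as [|q l IH]; simpl; auto.
  destruct excluded_middle_informative as [h|h].
  - unfold Rmax at 1 2. destruct Rle_dec.
    + destruct IH as [IH|[p [H1 [H2 H3]]]]. left; auto.
      right. exists p. auto.
    + right. exists q. auto.
  - destruct IH as [IH|[p [H1 [H2 H3]]]]; auto. right; exists p; auto.
Qed.

Lemma vf_le1 lst x : (forall p, In p lst -> fst p <= 1) -> vfun lst x <= 1.
Proof.
  intros H. destruct (vf_ach lst x) as [->|[p [H1 [H2 ->]]]]. lra. auto.
Qed.

Lemma vf_ext (g : (X -> Prop) -> (X -> Prop)) lst x :
  (forall p, In p lst -> forall y, g (snd p) y <-> snd p y) ->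
  vfun (map (fun p => (fst p, g (snd p))) lst) x = vfun lst x.
Proof.
  induction lst as [|q l IH]; simpl; intros H; auto.
  rewrite IH by auto.
  destruct (excluded_middle_informative (g (snd q) x)) as [h1|h1];
  destruct (excluded_middle_informative (snd q x)) as [h2|h2]; auto; exfalso.
  apply h2, (H q (or_introl eq_refl)), h1. apply h1, (H q (or_introl eq_refl)), h2.
Qed.

Lemma vf_level_pos lst x b : 0 < b ->
  (b <= vfun lst x <-> exists p, In p lst /\ snd p x /\ b <= fst p).
Proof.
  intros Hb. split.
  - intros H. destruct (vf_ach lst x) as [h|[p [H1 [H2 H3]]]]. lra. exists p. split; auto. split; auto. lra.
  - intros [p [H1 [H2 H3]]]. pose proof (vf_ub lst x p H1 H2). lra.
Qed.

Lemma zadeh_vf (g : X -> X) lst x : (forall p, In p lst -> fst p <= 1) ->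
  zadeh g (vfun lst) x = vfun (map (fun p => (fst p, image g (snd p))) lst) x.
Proof.
  intros H1.
  assert (Hw : forall y, 0 <= vfun lst y <= 1) by (intros y; split; [apply vf_ge0|apply vf_le1; auto]).
  set (lst' := map (fun p => (fst p, image g (snd p))) lst).
  destruct (zadeh_char g (vfun lst) x Hw) as [_ [[Hz Hn]|[[z0 Hz0] [Hup Hleast]]]].
  - rewrite Hz. destruct (vf_ach lst' x) as [h|[p' [Hp1 [Hp2 Hp3]]]]; auto.
    exfalso. apply Hn. unfold lst' in Hp1. apply in_map_iff in Hp1. destruct Hp1 as [p [<- Hp]].
    destruct Hp2 as [z [_ Hz']]. eauto.
  - apply Rle_antisym.
    + apply Hleast. intros z Hz.
      destruct (vf_ach lst z) as [h|[p [Hp1 [Hp2 Hp3]]]]. rewrite h; apply vf_ge0.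
      rewrite Hp3. apply (vf_ub lst' x (fst p, image g (snd p))).
      unfold lst'. apply in_map_iff. exists p; auto. simpl. exists z; auto.
    + destruct (vf_ach lst' x) as [h|[p' [Hp1 [Hp2 Hp3]]]].
      * rewrite h. eapply Rle_trans; [apply (Hw z0)|apply Hup; auto].
      * rewrite Hp3. unfold lst' in Hp1. apply in_map_iff in Hp1. destruct Hp1 as [p [<- Hp]].
        simpl in *. destruct Hp2 as [z [Hz1 Hz2]].
        eapply Rle_trans; [apply (vf_ub lst z p); auto|]. apply Hup; auto.
Qed.

Lemma iter_vf (g : X -> X) n lst : (forall p, In p lst -> fst p <= 1) ->
  Nat.iter n (zadeh g) (vfun lst) = vfun (map (fun p => (fst p, Nat.iter n (image g) (snd p))) lst).
Proof.
  intros H1. induction n as [|n IH]; simpl.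
  - apply functional_extensionality. intros x. rewrite (vf_ext (fun A => A)); auto. tauto.
  - rewrite IH. apply functional_extensionality. intros x.
    rewrite zadeh_vf. rewrite map_map. simpl. reflexivity.
    intros p Hp. apply in_map_iff in Hp. destruct Hp as [q [<- Hq]]. simpl. auto.
Qed.

Lemma vf_near (lst : list (R * (X -> Prop))) : (forall p, In p lst -> d_compact d (snd p)) ->
  forall x, exists e, 0 < e /\ forall y, d x y < e -> forall p, In p lst -> snd p y -> snd p x.
Proof.
  induction lst as [|q l IH]; intros Hc x.
  - exists 1. split. lra. easy.
  - destruct (IH (fun p Hp => Hc p (or_intror Hp)) x) as [e1 [He1 H1]].
    destruct (classic (snd q x)) as [h|h].
    + exists e1. split; auto. intros y Hy p [<-|Hp] Hpy; auto. eapply H1; eauto.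
    + destruct (compact_closed _ _ (Hc q (or_introl eq_refl)) h) as [e2 [He2 H2]].
      exists (Rmin e1 e2). split. apply Rmin_pos; auto.
      intros y Hy p [<-|Hp] Hpy.
      * exfalso. apply (H2 y); auto. eapply Rlt_le_trans; [exact Hy|apply Rmin_r].
      * eapply H1; eauto. eapply Rlt_le_trans; [exact Hy|apply Rmin_l].
Qed.

Lemma vf_level0 (lst : list (R * (X -> Prop))) x : (forall p, In p lst -> d_compact d (snd p)) ->
  (level d (vfun lst) 0 x <-> exists p, In p lst /\ 0 < fst p /\ snd p x).
Proof.
  intros Hc. split.
  - intros [_ H]. specialize (H (Rle_refl 0)). apply NNPP. intros Hn.
    destruct (vf_near lst Hc x) as [e [He He2]].
    destruct (H e He) as [y [Hy1 Hy2]].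
    destruct (vf_ach lst y) as [h|[p [Hp1 [Hp2 Hp3]]]]. lra.
    apply Hn. exists p. split; auto. split. lra. eapply He2; eauto.
  - intros [p [Hp1 [Hp2 Hp3]]]. apply level0_of_pos. pose proof (vf_ub lst x p Hp1 Hp3). lra.
Qed.

Lemma compact_list_union (lst : list (R * (X -> Prop))) (Q : R * (X -> Prop) -> Prop) :
  (forall p, In p lst -> d_compact d (snd p)) ->
  d_compact d (fun x => exists p, In p lst /\ Q p /\ snd p x).
Proof.
  induction lst as [|q l IH]; intros Hc.
  - eapply compact_ext; [|apply compact_empty]. intros x; split; [easy|]. intros [p [[] _]].
  - assert (Hq : d_compact d (fun x => Q q /\ snd q x)).
    { destruct (classic (Q q)) as [h|h].
      - eapply compact_ext; [|apply (Hc q (or_introl eq_refl))]. intros x; tauto.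
      - eapply compact_ext; [|apply compact_empty]. intros x; tauto. }
    eapply compact_ext; [|apply (compact_union _ _ Hq (IH (fun p Hp => Hc p (or_intror Hp))))].
    intros x. split.
    + intros [[h1 h2]|[p [H1 H2]]]. exists q. simpl; auto. exists p. simpl; auto.
    + intros [p [[<-|H1] H2]]. left; tauto. right. exists p; auto.
Qed.

Lemma vf_inFX (lst : list (R * (X -> Prop))) : (forall p, In p lst -> 0 <= fst p <= 1) ->
  (forall p, In p lst -> d_compact d (snd p)) ->
  (exists p, In p lst /\ fst p = 1 /\ exists x, snd p x) -> in_FX d (vfun lst).
Proof.
  intros H01 Hc [p1 [Hp1 [Hp2 [x1 Hx1]]]].
  assert (Hle : forall p, In p lst -> fst p <= 1) by (intros p Hp; apply H01; auto).
  split; [|split; [|split]].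
  - intros x. split. apply vf_ge0. apply vf_le1; auto.
  - intros x r Hr. destruct (vf_near lst Hc x) as [e [He He2]]. exists e. split; auto.
    intros y Hy. destruct (vf_ach lst y) as [h|[p [H1 [H2 H3]]]].
    + pose proof (vf_ge0 lst x). lra.
    + rewrite H3. pose proof (vf_ub lst x p H1 (He2 y Hy p H1 H2)). lra.
  - eapply compact_ext; [|apply (compact_list_union lst (fun p => 0 < fst p) Hc)].
    intros x. symmetry. apply vf_level0; auto.
  - exists x1. apply level_pos. lra. apply vf_level_pos. lra. exists p1. split; auto. split; auto. lra.
Qed.

Definition closeF (u v : X -> R) e := forall a, unitI a ->
  (forall x, level d u a x -> exists z, level d v a z /\ d x z <= e) /\
  (forall z, level d v a z -> exists x, level d u a x /\ d z x <= e).

Lemma close_dinf u v e : closeF u v e -> Rbar_le (d_inf d u v) (Finite e).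
Proof.
  intros H. apply lub_least. intros r [a [Ha ->]]. destruct (H a Ha) as [H1 H2].
  apply dH_le; auto.
Qed.

Lemma in_T_id : in_T (fun a => a).
Proof.
  split; [|split]. auto. auto. exists (fun a => a). split; auto. split; auto. split; auto.
  split; intros a eps _ He; exists eps; split; auto.
Qed.

Lemma close_d0 u v e : 0 < e -> closeF u v e -> Rbar_le (d_0 d u v) (Finite e).
Proof.
  intros He H. apply glb_lb. exists e. split; auto. split; auto.
  exists (fun a => a). split. apply in_T_id. split.
  intros a _. rewrite Rminus_diag, Rabs_R0. lra.
  apply close_dinf; auto.
Qed.

Lemma unitI_cases a : unitI a -> 0 < a \/ a = 0.
Proof. unfold unitI. intros; lra. Qed.

Lemma dbar_same x z a e : d x z <= e -> dbar d (x, a) (z, a) <= e.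
Proof.
  intros H. unfold dbar; simpl. rewrite Rminus_diag, Rabs_R0. apply Rmax_lub; auto.
  pose proof (d_pos x z). lra.
Qed.

Lemma closeF_sym u v e : closeF u v e -> closeF v u e.
Proof. intros H a Ha. destruct (H a Ha). split; auto. Qed.

Lemma close_sendo u v e : (forall x, 0 <= v x) -> closeF u v e ->
  forall p, sendo d u p -> exists q, sendo d v q /\ dbar d p q <= e.
Proof.
  intros Hv H [x a] [[Ha1 Ha2] Hx]. simpl in *. destruct (unitI_cases a Ha1) as [Hpos| ->].
  - assert (Hl : level d u a x) by (apply level_pos; auto).
    destruct (proj1 (H a Ha1) x Hl) as [z [Hz1 Hz2]].
    exists (z, a). split. split. split; simpl; auto. apply level_pos in Hz1; auto.
    simpl. eapply level_sub0; eauto. apply dbar_same; auto.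
  - destruct (proj1 (H 0 Ha1) x Hx) as [z [Hz1 Hz2]].
    exists (z, 0). split. split. split; simpl; auto. simpl; auto. apply dbar_same; auto.
Qed.

Lemma close_endo u v e : (forall x, 0 <= v x) -> 0 <= e -> closeF u v e ->
  forall p, endo u p -> exists q, endo v q /\ dbar d p q <= e.
Proof.
  intros Hv He H [x a] [Ha1 Ha2]. simpl in *. destruct (unitI_cases a Ha1) as [Hpos| ->].
  - assert (Hl : level d u a x) by (apply level_pos; auto).
    destruct (proj1 (H a Ha1) x Hl) as [z [Hz1 Hz2]].
    exists (z, a). split. split; simpl; auto. apply level_pos in Hz1; auto. apply dbar_same; auto.
  - exists (x, 0). split. split; simpl; auto. apply dbar_same; rewrite d_xx; auto.
Qed.

Lemma close_dS u v e : (forall x, 0 <= u x) -> (forall x, 0 <= v x) -> closeF u v e ->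
  Rbar_le (d_S d u v) (Finite e).
Proof.
  intros Hu Hv H. apply dH_le. apply close_sendo; auto.
  intros p Hp. destruct (close_sendo v u e Hu (closeF_sym _ _ _ H) p Hp) as [q [Hq1 Hq2]].
  exists q. auto.
Qed.

Lemma close_dE u v e : (forall x, 0 <= u x) -> (forall x, 0 <= v x) -> 0 <= e -> closeF u v e ->
  Rbar_le (d_E d u v) (Finite e).
Proof.
  intros Hu Hv He H. apply dH_le. apply close_endo; auto.
  intros p Hp. destruct (close_endo v u e Hu He (closeF_sym _ _ _ H) p Hp) as [q [Hq1 Hq2]].
  exists q. auto.
Qed.

Lemma build u (Hu : in_FX d u) (HK : dense_per_K d f) r (Hr : 0 < r) : forall cs : list X,
  exists out : list (R * (X -> Prop)),
  (forall p, In p out -> exists y, level d u 0 y /\ fst p = u y /\ in_KX d (snd p) /\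
      per_set f (snd p) /\ forall z, snd p z -> d y z < r) /\
  (forall c, In c cs -> forall x, level d u 0 x -> d c x < r ->
      exists p, In p out /\ u x <= fst p /\ forall z, snd p z -> d x z < 3 * r).
Proof.
  destruct Hu as [Hu1 [Hu2 [Hu3 Hu4]]].
  induction cs as [|c cs [out [IH1 IH2]]].
  - exists nil. split; intros; easy.
  - set (Kc := fun y => level d u 0 y /\ d c y <= r).
    destruct (classic (exists y, Kc y)) as [Hne|Hne].
    + assert (HKc : d_compact d Kc).
      { apply closed_subset_compact; auto. intros y Hy. apply Rnot_le_lt in Hy.
        exists (d c y - r). split. lra. intros z Hz Hz2.
        pose proof (d_tri c z y). rewrite (d_sym z y) in H. lra. }
      destruct (attain u Kc Hu2 HKc Hne) as [ym [[Hym1 Hym2] Hym3]].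
      assert (Hs : in_KX d (fun x => x = ym)) by (split; [exists ym; auto|apply compact_single]).
      destruct (HK _ Hs r Hr) as [L [HL1 [HL2 HL3]]].
      destruct (dH_lt d _ _ _ HL3) as [_ HL4].
      exists ((u ym, L) :: out). split.
      * intros p [<-|Hp]; auto. exists ym. simpl. split; auto. split; auto. split; auto. split; auto.
        intros z Hz. destruct (HL4 z Hz) as [a [-> Ha]]. rewrite d_sym. auto.
      * intros c' [<-|Hc'] x Hx Hcx.
        -- exists (u ym, L). split. simpl; auto. simpl. split.
           apply Hym3. split; auto. lra.
           intros z Hz. destruct (HL4 z Hz) as [a [-> Ha]].
           pose proof (d_tri x c ym). pose proof (d_tri x ym z). rewrite (d_sym x c) in H.
           rewrite (d_sym ym z) in H0. lra.
        -- destruct (IH2 c' Hc' x Hx Hcx) as [p [H1 H2]]. exists p. simpl; auto.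
    + exists out. split; auto. intros c' [<-|Hc'] x Hx Hcx.
      * exfalso. apply Hne. exists x. split; auto. lra.
      * apply (IH2 c' Hc' x Hx Hcx).
Qed.

Lemma common_period (lst : list (R * (X -> Prop))) : (forall p, In p lst -> per_set f (snd p)) ->
  exists P, (1 <= P)%nat /\ forall p, In p lst -> forall x, Nat.iter P (image f) (snd p) x <-> snd p x.
Proof.
  induction lst as [|q l IH]; intros H.
  - exists 1%nat. split; auto. easy.
  - destruct (IH (fun p Hp => H p (or_intror Hp))) as [P [HP1 HP2]].
    destruct (H q (or_introl eq_refl)) as [pq [Hpq1 Hpq2]].
    exists (P * pq)%nat. split. nia.
    intros p [<-|Hp] x. apply per_mult; auto.
    rewrite Nat.mul_comm. apply per_mult; auto.
Qed.

Lemma forward (HK : dense_per_K d f) u (Hu : in_FX d u) eps (He : 0 < eps) :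
  exists v, in_FX d v /\ per_fuzzy f v /\ closeF u v (4 * (eps / 5)) /\ forall x, 0 <= v x.
Proof.
  set (r := eps / 5). assert (Hr : 0 < r) by (unfold r; lra).
  pose proof Hu as [Hu1 [Hu2 [Hu3 [x1 Hx1]]]].
  destruct (Hu3 X (fun c x => d c x < r)) as [cs Hcs].
  { intros c y Hy. exists (r - d c y). split. lra. intros z Hz. pose proof (d_tri c y z). lra. }
  { intros x Hx. exists x. rewrite d_xx. auto. }
  destruct (build u Hu HK r Hr cs) as [out [Ho1 Ho2]].
  assert (Hcov : forall x, level d u 0 x -> exists p, In p out /\ u x <= fst p /\ forall z, snd p z -> d x z < 3 * r).
  { intros x Hx. destruct (Hcs x Hx) as [c [Hc1 Hc2]]. eapply Ho2; eauto. }
  assert (H01 : forall p, In p out -> 0 <= fst p <= 1).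
  { intros p Hp. destruct (Ho1 p Hp) as [y [_ [-> _]]]. apply Hu1. }
  assert (Hc : forall p, In p out -> d_compact d (snd p)).
  { intros p Hp. destruct (Ho1 p Hp) as [y [_ [_ [[_ h] _]]]]. auto. }
  assert (Hne : forall p, In p out -> exists z, snd p z).
  { intros p Hp. destruct (Ho1 p Hp) as [y [_ [_ [[h _] _]]]]. auto. }
  exists (vfun out). split; [|split; [|split]].
  - apply vf_inFX; auto.
    apply level_pos in Hx1; [|lra].
    destruct (Hcov x1 (level_sub0 u 1 x1 ltac:(lra) (proj2 (level_pos u 1 x1 ltac:(lra)) Hx1)))
      as [p [Hp1 [Hp2 _]]].
    exists p. split; auto. split. pose proof (H01 p Hp1). pose proof (Hu1 x1). unfold unitI in *. lra.
    auto.
  - destruct (common_period out) as [P [HP1 HP2]].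
    { intros p Hp. destruct (Ho1 p Hp) as [y [_ [_ [_ [h _]]]]]. auto. }
    exists P. split; auto. rewrite iter_vf by (intros p Hp; apply H01; auto).
    apply functional_extensionality. intros x.
    apply (vf_ext (fun A => Nat.iter P (image f) A)). auto.
  - intros a Ha. destruct (unitI_cases a Ha) as [Hpos| ->]; split.
    + intros x Hx. pose proof Hx as Hx'. apply level_pos in Hx'; auto.
      destruct (Hcov x (level_sub0 u a x Hpos Hx)) as [p [Hp1 [Hp2 Hp3]]].
      destruct (Hne p Hp1) as [z Hz]. exists z. split.
      * apply level_pos; auto. apply vf_level_pos; auto. exists p. split; auto. split; auto. lra.
      * specialize (Hp3 z Hz). lra.
    + intros z Hz. apply level_pos in Hz; auto. apply vf_level_pos in Hz; auto.
      destruct Hz as [p [Hp1 [Hp2 Hp3]]]. destruct (Ho1 p Hp1) as [y [_ [Hy2 [_ [_ Hy5]]]]].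
      exists y. split. apply level_pos; auto. lra. rewrite d_sym. specialize (Hy5 z Hp2). lra.
    + intros x [_ Hx]. destruct (Hx (Rle_refl 0) r Hr) as [w [Hw1 Hw2]].
      destruct (Hcov w (level0_of_pos u w Hw1)) as [p [Hp1 [Hp2 Hp3]]].
      destruct (Hne p Hp1) as [z Hz]. exists z. split.
      * apply vf_level0; auto. exists p. split; auto. split; auto. lra.
      * specialize (Hp3 z Hz). pose proof (d_tri x w z). lra.
    + intros z Hz. apply vf_level0 in Hz; auto.
      destruct Hz as [p [Hp1 [Hp2 Hp3]]]. destruct (Ho1 p Hp1) as [y [_ [Hy2 [_ [_ Hy5]]]]].
      exists y. split. apply level0_of_pos. lra. rewrite d_sym. specialize (Hy5 z Hp3). lra.
  - intros x. apply vf_ge0.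
Qed.

Definition chi (K : X -> Prop) (x : X) : R := if excluded_middle_informative (K x) then 1 else 0.

Lemma chi_pos K x : 0 < chi K x <-> K x.
Proof. unfold chi. destruct excluded_middle_informative; split; intros; auto; try lra; easy. Qed.

Lemma chi_ge K x b : 0 < b -> b <= chi K x -> K x.
Proof. intros Hb H. apply chi_pos. lra. Qed.

Lemma chi_level1 K x : level d (chi K) 1 x <-> K x.
Proof.
  rewrite level_pos by lra. unfold chi. destruct excluded_middle_informative; split; intros; auto; try lra; easy.
Qed.

Lemma chi_inFX K : in_KX d K -> in_FX d (chi K).
Proof.
  intros [[x0 Hx0] HK].
  assert (Hlev0 : forall x, level d (chi K) 0 x <-> K x).
  { intros x. split.
    - intros [_ H]. apply NNPP. intros Hn. destruct (compact_closed K x HK Hn) as [e [He He2]].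
      destruct (H (Rle_refl 0) e He) as [y [Hy1 Hy2]]. apply (He2 y Hy2). apply chi_pos; auto.
    - intros Hx. apply level0_of_pos, chi_pos, Hx. }
  split; [|split; [|split]].
  - intros x. unfold chi, unitI. destruct excluded_middle_informative; lra.
  - intros x r Hr. unfold chi in Hr. destruct excluded_middle_informative as [h|h].
    + exists 1. split. lra. intros y _. unfold chi. destruct excluded_middle_informative; lra.
    + destruct (compact_closed K x HK h) as [e [He He2]]. exists e. split; auto.
      intros y Hy. unfold chi. destruct excluded_middle_informative as [h2|h2]; [|lra].
      exfalso. apply (He2 y Hy h2).
  - eapply compact_ext; [|exact HK]. intros x. symmetry. apply Hlev0.
  - exists x0. apply chi_level1. auto.
Qed.

Lemma level_KX v b : in_FX d v -> 0 < b <= 1 -> in_KX d (level d v b).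
Proof.
  intros [Hv1 [Hv2 [Hv3 [x1 Hx1]]]] Hb. split.
  - exists x1. apply level_pos in Hx1; [|lra]. apply level_pos; lra.
  - eapply compact_ext; [|apply (closed_subset_compact _ (level d v b) Hv3)].
    + intros x. split. intros [_ h]; auto. intros h. split; auto. eapply level_sub0; [|exact h]. lra.
    + intros y Hy. assert (Hlt : v y < b).
      { apply Rnot_le_lt. intros h. apply Hy, level_pos; auto. lra. }
      destruct (Hv2 y b Hlt) as [e [He He2]]. exists e. split; auto.
      intros z Hz Hz2. apply level_pos in Hz2; [|lra]. specialize (He2 z Hz). lra.
Qed.

Lemma back_common K eps v L : in_KX d K -> 0 < eps -> in_FX d v -> per_fuzzy f v ->
  (L = level d v 1 \/ L = level d v (1/2)) ->
  (forall x, K x -> exists z, L z /\ d x z < eps / 2) ->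
  (forall z, L z -> exists x, K x /\ d z x < eps / 2) ->
  exists L, in_KX d L /\ per_set f L /\ Rbar_lt (dH d K L) (Finite eps).
Proof.
  intros HK He Hv Hper HL H1 H2. exists L.
  assert (0 < 1 <= 1) by lra. assert (0 < 1/2 <= 1) by lra.
  split; [|split].
  - destruct HL as [->| ->]; apply level_KX; auto.
  - destruct HL as [->| ->]; apply per_level; auto; lra.
  - eapply Rbar_le_lt_trans. apply (dH_le d K L (eps/2)).
    intros a Ha. destruct (H1 a Ha) as [z [Hz1 Hz2]]. exists z. split; auto. lra.
    intros a Ha. destruct (H2 a Ha) as [z [Hz1 Hz2]]. exists z. split; auto. lra.
    simpl. lra.
Qed.

Lemma back_inf : dense_per_F d f (d_inf d) -> dense_per_K d f.
Proof.
  intros H K HK eps He.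
  destruct (H (chi K) (chi_inFX K HK) (eps/2) ltac:(lra)) as [v [Hv1 [Hv2 Hv3]]].
  assert (Hl : Rbar_lt (dH d (level d (chi K) 1) (level d v 1)) (Finite (eps/2))).
  { eapply Rbar_le_lt_trans; [|exact Hv3]. apply lub_ub. exists 1. split; auto. unfold unitI; lra. }
  destruct (dH_lt d _ _ _ Hl) as [h1 h2].
  apply (back_common K eps v (level d v 1)); auto.
  - intros x Hx. apply h1. apply chi_level1; auto.
  - intros z Hz. destruct (h2 z Hz) as [x [Hx1 Hx2]]. exists x. split; auto. apply chi_level1; auto.
Qed.

Lemma xi_one xi : in_T xi -> xi 1 = 1 /\ forall a, unitI a -> a < 1 -> xi a < 1.
Proof.
  intros [Hmono [HI [g [Hg1 [Hg2 [Hg3 _]]]]]].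
  assert (U1 : unitI 1) by (unfold unitI; lra).
  assert (Hx1 : xi 1 = 1).
  { pose proof (Hg1 1 U1) as G1. pose proof (Hg3 1 U1) as G3. pose proof (HI 1 U1) as I1.
    unfold unitI in *. destruct (Rle_lt_or_eq_dec _ _ (proj2 G1)) as [h|h].
    - pose proof (Hmono _ _ (Hg1 1 U1) U1 h). lra.
    - rewrite h in G3. auto. }
  split; auto. intros a Ha Ha1. rewrite <- Hx1. apply Hmono; auto.
Qed.

Lemma back_0 : dense_per_F d f (d_0 d) -> dense_per_K d f.
Proof.
  intros H K HK eps He.
  destruct (H (chi K) (chi_inFX K HK) (eps/2) ltac:(lra)) as [v [Hv1 [Hv2 Hv3]]].
  assert (Hex : exists eps0 xi, eps0 < eps/2 /\ in_T xi /\
     Rbar_le (d_inf d (chi K) (fun x => xi (v x))) (Finite eps0)).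
  { apply NNPP. intros Hn.
    assert (Rbar_le (Finite (eps/2)) (d_0 d (chi K) v)).
    { apply glb_greatest. intros e [eps0 [-> [_ [xi [Hxi [_ Hd]]]]]].
      simpl. apply Rnot_lt_le. intros hl. apply Hn. exists eps0, xi. auto. }
    apply (Rbar_lt_not_le _ _ Hv3 H0). }
  destruct Hex as [eps0 [xi [Heps0 [Hxi Hd]]]].
  assert (Hl : Rbar_lt (dH d (level d (chi K) 1) (level d (fun x => xi (v x)) 1)) (Finite (eps/2))).
  { eapply Rbar_le_lt_trans; [|apply (Rbar_le_lt_trans _ _ _ Hd); simpl; exact Heps0].
    apply lub_ub. exists 1. split; auto. unfold unitI; lra. }
  destruct (dH_lt d _ _ _ Hl) as [h1 h2].
  destruct (xi_one xi Hxi) as [X1 X2].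
  assert (Hlv : forall x, level d (fun x => xi (v x)) 1 x <-> level d v 1 x).
  { intros x. rewrite !level_pos by lra. destruct Hv1 as [Hv1 _]. pose proof (Hv1 x) as U.
    unfold unitI in U. destruct (Rle_lt_or_eq_dec _ _ (proj2 U)) as [h|h].
    - pose proof (X2 _ U h). split; intros; lra.
    - rewrite h, X1. split; intros; lra. }
  apply (back_common K eps v (level d v 1)); auto.
  - intros x Hx. destruct (h1 x) as [z [Hz1 Hz2]]. apply chi_level1; auto.
    exists z. split; auto. apply Hlv; auto.
  - intros z Hz. destruct (h2 z) as [x [Hx1 Hx2]]. apply Hlv; auto.
    exists x. split; auto. apply chi_level1; auto.
Qed.

Lemma Rmax_lt_inv a b e : Rmax a b < e -> a < e /\ b < e.
Proof. intros H. split; eapply Rle_lt_trans; eauto; [apply Rmax_l|apply Rmax_r]. Qed.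

Lemma back_S : dense_per_F d f (d_S d) -> dense_per_K d f.
Proof.
  intros H K HK eps He.
  set (e' := Rmin (eps/2) (1/4)).
  assert (He' : 0 < e') by (apply Rmin_pos; lra).
  assert (He1 : e' <= eps/2) by apply Rmin_l. assert (He2 : e' <= 1/4) by apply Rmin_r.
  destruct (H (chi K) (chi_inFX K HK) e' He') as [v [Hv1 [Hv2 Hv3]]].
  destruct (dH_lt _ _ _ _ Hv3) as [h1 h2].
  apply (back_common K eps v (level d v (1/2))); auto.
  - intros x Hx. destruct (h1 (x, 1)) as [[z g] [[[Hg1 Hg2] Hz] Hd]].
    + split. split; simpl. unfold unitI; lra. unfold chi. destruct excluded_middle_informative; [lra|easy].
      simpl. apply level0_of_pos, chi_pos, Hx.
    + unfold dbar in Hd; simpl in *. apply Rmax_lt_inv in Hd. destruct Hd as [Hd1 Hd2].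
      apply Rabs_def2 in Hd2. exists z. split. apply level_pos. lra. lra. lra.
  - intros z Hz. pose proof Hz as Hz'. apply level_pos in Hz'; [|lra].
    destruct (h2 (z, 1/2)) as [[x g] [[[Hg1 Hg2] Hx] Hd]].
    + split. split; simpl; auto. unfold unitI; lra. simpl. eapply level_sub0; [|exact Hz]. lra.
    + unfold dbar in Hd; simpl in *. apply Rmax_lt_inv in Hd. destruct Hd as [Hd1 Hd2].
      apply Rabs_def2 in Hd2. exists x. split. apply (chi_ge K x g). lra. auto. lra.
Qed.

Lemma back_E : dense_per_F d f (d_E d) -> dense_per_K d f.
Proof.
  intros H K HK eps He.
  set (e' := Rmin (eps/2) (1/4)).
  assert (He' : 0 < e') by (apply Rmin_pos; lra).
  assert (He1 : e' <= eps/2) by apply Rmin_l. assert (He2 : e' <= 1/4) by apply Rmin_r.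
  destruct (H (chi K) (chi_inFX K HK) e' He') as [v [Hv1 [Hv2 Hv3]]].
  destruct (dH_lt _ _ _ _ Hv3) as [h1 h2].
  apply (back_common K eps v (level d v (1/2))); auto.
  - intros x Hx. destruct (h1 (x, 1)) as [[z g] [[Hg1 Hg2] Hd]].
    + split; simpl. unfold unitI; lra. unfold chi. destruct excluded_middle_informative; [lra|easy].
    + unfold dbar in Hd; simpl in *. apply Rmax_lt_inv in Hd. destruct Hd as [Hd1 Hd2].
      apply Rabs_def2 in Hd2. exists z. split. apply level_pos. lra. lra. lra.
  - intros z Hz. pose proof Hz as Hz'. apply level_pos in Hz'; [|lra].
    destruct (h2 (z, 1/2)) as [[x g] [[Hg1 Hg2] Hd]].
    + split; simpl; auto. unfold unitI; lra.
    + unfold dbar in Hd; simpl in *. apply Rmax_lt_inv in Hd. destruct Hd as [Hd1 Hd2].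
      apply Rabs_def2 in Hd2. exists x. split. apply (chi_ge K x g). lra. auto. lra.
Qed.

Lemma fwd_gen (rho : (X -> R) -> (X -> R) -> Rbar) :
  (forall u v e, in_FX d u -> in_FX d v -> 0 < e -> closeF u v e -> Rbar_le (rho u v) (Finite e)) ->
  dense_per_K d f -> dense_per_F d f rho.
Proof.
  intros Hrho HK u Hu eps He.
  destruct (forward HK u Hu eps He) as [v [Hv1 [Hv2 [Hv3 _]]]].
  exists v. split; auto. split; auto.
  eapply Rbar_le_lt_trans. apply (Hrho u v (4 * (eps / 5))); auto. lra. simpl. lra.
Qed.

Lemma inFX_nonneg u : in_FX d u -> forall x, 0 <= u x.
Proof. intros [H _] x. apply H. Qed.

End Topo.

Theorem lemma4p1 (X : Type) (d : X -> X -> R) (f : X -> X)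
  (hd : is_metric d) (hf : continuous_map d f) :
  (dense_per_K d f <-> dense_per_F d f (d_inf d)) /\
  (dense_per_K d f <-> dense_per_F d f (d_0 d)) /\
  (dense_per_K d f <-> dense_per_F d f (d_S d)) /\
  (dense_per_K d f <-> dense_per_F d f (d_E d)).
Proof.
  split; [|split; [|split]]; split.
  - apply (fwd_gen X d hd f). intros u v e _ _ _ H. apply close_dinf; auto.
  - apply (back_inf X d hd f hf).
  - apply (fwd_gen X d hd f). intros u v e _ _ He H. apply close_d0; auto.
  - apply (back_0 X d hd f hf).
  - apply (fwd_gen X d hd f). intros u v e Hu Hv _ H.
    apply (close_dS X d hd); auto; apply (inFX_nonneg X d); auto.
  - apply (back_S X d hd f hf).
  - apply (fwd_gen X d hd f). intros u v e Hu Hv He H.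
    apply (close_dE X d hd); auto; try apply (inFX_nonneg X d); auto. lra.
  - apply (back_E X d hd f hf).
Qed.
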